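(* Let $\lambda>0$ and $0<\theta<\pi/2$. For every $n\ge0$, $\mathcal C_{\pi/2-\theta}(V_n)\cap H_n=\emptyset$.
   Context: $\mathcal P_\lambda$: homogeneous Poisson point process of intensity $\lambda$ on $\mathbb R^2$ under its Palm distribution (point added at origin $o$). Polar coordinates $(r_v,\varphi_v)$, $\varphi_v\in[-\pi,\pi)$ from $e_1$; for $\alpha\in(0,\pi/2)$, $\mathcal C_\alpha=\{v:r_v>0,|\varphi_v|\le\alpha\}$, $\mathcal C_\alpha(v)=v+\mathcal C_\alpha$. Navigation: $V_0=o$, $V_{i+1}=\arg\min\{|v-V_i|:v\in\mathcal P_\lambda\cap\mathcal C_\theta(V_i)\}$, $U_i=V_i-V_{i-1}$. History sets: $H_0=\emptyset$, $H_1=\mathcal C_\theta(U_1)\cap B(o,|U_1|)$, $H_n=\mathcal C_\theta(V_{n-1}+U_n)\cap(H_{n-1}\cup B(V_{n-1},|U_n|))$ for $n\ge2$, where $B(x,r)$ is the open ball of radius $r$ about $x$. *)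

(* Defs.v *)
From Stdlib Require Import Reals Lra List.
Open Scope R_scope.

Definition pt : Type := (R * R)%type.
Definition origin : pt := (0, 0).
Definition padd (x y : pt) : pt := (fst x + fst y, snd x + snd y).
Definition psub (x y : pt) : pt := (fst x - fst y, snd x - snd y).
Definition pnorm (x : pt) : R := sqrt (fst x ^ 2 + snd x ^ 2).
Definition pdist (x y : pt) : R := pnorm (psub x y).

Definition cone0 (alpha : R) (v : pt) : Prop :=
  exists r phi, r > 0 /\ - PI <= phi < PI /\ Rabs phi <= alpha /\
    v = (r * cos phi, r * sin phi).
Definition cone (alpha : R) (x : pt) (w : pt) : Prop := cone0 alpha (psub w x).

Definition ball (x : pt) (r : R) (w : pt) : Prop := pdist w x < r.

Definition nav_step (theta : R) (P : pt -> Prop) (x y : pt) : Prop :=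
  P y /\ cone theta x y /\
  forall v, P v -> cone theta x v -> pdist y x <= pdist v x.

Definition U (V : nat -> pt) (i : nat) : pt := psub (V i) (V (pred i)).

Fixpoint H (theta : R) (V : nat -> pt) (n : nat) : pt -> Prop :=
  match n with
  | O => fun _ => False
  | S m =>
      match m with
      | O => fun w => cone theta (U V 1) w /\ ball origin (pnorm (U V 1)) w
      | S _ => fun w =>
          cone theta (padd (V m) (U V n)) w /\
          (H theta V m w \/ ball (V m) (pnorm (U V n)) w)
      end
  end.

Definition locally_finite (P : pt -> Prop) : Prop :=
  forall x r, exists l : list pt, forall y, P y -> pdist y x < r -> In y l.

(* Main.v *)
Require Import Defs.
From Stdlib Require Import Reals Lra Lia.
Open Scope R_scope.

Lemma Rabs_le_inv x y : Rabs x <= y -> -y <= x <= y.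
Proof. unfold Rabs; destruct (Rcase_abs x); lra. Qed.
Lemma Rabs_le x y : -y <= x <= y -> Rabs x <= y.
Proof. unfold Rabs; destruct (Rcase_abs x); lra. Qed.

Definition Cc (a : R) (v : pt) : Prop :=
  0 < fst v /\ Rabs (snd v) * cos a <= sin a * fst v.

Lemma cone0_Cc a v : 0 < a < PI/2 -> cone0 a v -> Cc a v.
Proof.
  intros Ha [r [phi [Hr [Hp [Hab ->]]]]]; simpl.
  assert (Hc : 0 < cos phi) by (apply cos_gt_0; apply Rabs_le_inv in Hab; lra).
  split; [apply Rmult_lt_0_compat; lra|].
  assert (H1 : 0 <= sin (a - phi)) by (apply sin_ge_0; apply Rabs_le_inv in Hab; lra).
  assert (H2 : 0 <= sin (a + phi)) by (apply sin_ge_0; apply Rabs_le_inv in Hab; lra).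
  rewrite sin_minus in H1; rewrite sin_plus in H2.
  simpl; rewrite Rabs_mult, (Rabs_right r) by lra.
  destruct (Rle_or_lt 0 (sin phi)).
  - rewrite Rabs_right by lra. nra.
  - rewrite Rabs_left by lra. nra.
Qed.

Lemma Cc_cone0 a v : 0 < a < PI/2 -> Cc a v -> cone0 a v.
Proof.
  intros Ha [Hx Hy]. destruct v as [x y]; simpl in *.
  set (t := y / x).
  assert (Hca : 0 < cos a) by (apply cos_gt_0; lra).
  assert (Hsa : 0 < sin a) by (apply sin_gt_0; lra).
  assert (Ht : - tan a <= t <= tan a).
  { unfold t, tan.
    assert (E: forall z, z / x <= sin a / cos a <-> z * cos a <= sin a * x).
    { intro z. split; intro Hz.
      - apply Rmult_le_compat_r with (r := x * cos a) in Hz; [|nra].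
        field_simplify in Hz; lra.
      - apply Rmult_le_reg_r with (x * cos a); [nra|].
        field_simplify; lra. }
    assert (Hy' : - (y * cos a) <= sin a * x /\ y * cos a <= sin a * x).
    { unfold Rabs in Hy; destruct (Rcase_abs y); nra. }
    split.
    - assert (-y / x <= sin a / cos a) by (apply E; lra).
      replace (-y/x) with (-(y/x)) in H by (field; lra). lra.
    - apply E; lra. }
  assert (Hat : Rabs (atan t) <= a).
  { apply Rabs_le. split.
    - destruct (Req_dec t (- tan a)) as [E|E].
      + rewrite E, <- tan_neg, atan_tan; lra.
      + rewrite <- (atan_tan (-a)) by lra. rewrite tan_neg.
        left; apply atan_increasing; lra.
    - destruct (Req_dec t (tan a)) as [E|E].
      + rewrite E, atan_tan; lra.
      + rewrite <- (atan_tan a) by lra. left; apply atan_increasing; lra. }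
  pose proof (atan_bound t).
  assert (Hs : 0 < sqrt (1 + t²)) by (apply sqrt_lt_R0; unfold Rsqr; nra).
  exists (x * sqrt (1 + t²)), (atan t).
  split; [nra|]. split; [lra|]. split; [exact Hat|].
  rewrite cos_atan, sin_atan. f_equal; field_simplify; try lra.
  unfold t; field; lra.
Qed.

Lemma Cc_add a u v : 0 < a < PI/2 -> Cc a u -> Cc a v -> Cc a (padd u v).
Proof.
  intros Ha [H1 H2] [H3 H4]. unfold Cc, padd; simpl.
  assert (Hca : 0 < cos a) by (apply cos_gt_0; lra).
  split; [lra|].
  pose proof (Rabs_triang (snd u) (snd v)). nra.
Qed.

Lemma dot_lemma a u d : 0 < a < PI/2 -> Cc a u -> Cc (PI/2 - a) d -> pnorm u <= pnorm (padd u d).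
Proof.
  intros Ha [H1 H2] [H3 H4]. rewrite cos_shift, sin_shift in H4.
  assert (Hca : 0 < cos a) by (apply cos_gt_0; lra).
  assert (Hsa : 0 < sin a) by (apply sin_gt_0; lra).
  destruct u as [u1 u2], d as [d1 d2]; unfold pnorm, padd; simpl in *.
  apply sqrt_le_1_alt.
  assert (Hd : 0 <= u1 * d1 + u2 * d2).
  { assert (K: Rabs u2 * Rabs d2 * (cos a * sin a) <= u1 * d1 * (cos a * sin a)).
    { assert (0 <= Rabs u2) by apply Rabs_pos. assert (0 <= Rabs d2) by apply Rabs_pos.
      replace (Rabs u2 * Rabs d2 * (cos a * sin a)) with ((Rabs u2 * cos a) * (Rabs d2 * sin a)) by ring.
      replace (u1 * d1 * (cos a * sin a)) with ((sin a * u1) * (cos a * d1)) by ring.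
      apply Rmult_le_compat; nra. }
    assert (Rabs u2 * Rabs d2 <= u1 * d1) by (apply Rmult_le_reg_r with (cos a * sin a); nra).
    rewrite <- Rabs_mult in H.
    pose proof (Rle_abs (- (u2 * d2))). rewrite Rabs_Ropp in H0. lra. }
  nra.
Qed.

Lemma cone_Cc a x y : cone a x y -> 0 < a < PI/2 -> Cc a (psub y x).
Proof. intros H Ha; now apply cone0_Cc. Qed.

Lemma cone_trans a x y z : 0 < a < PI/2 -> cone a x y -> cone a y z -> cone a x z.
Proof.
  intros Ha H1 H2. unfold cone. apply Cc_cone0; auto.
  replace (psub z x) with (padd (psub y x) (psub z y)).
  - apply Cc_add; auto; now apply cone0_Cc.
  - unfold padd, psub; simpl; f_equal; ring.
Qed.

Lemma H_ball theta V n w : V 0%nat = origin -> H theta V n w ->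
  exists k, (1 <= k <= n)%nat /\ pdist w (V (pred k)) < pdist (V k) (V (pred k)).
Proof.
  intros H0. induction n as [|m IH]; simpl; [tauto|].
  destruct m as [|m'].
  - intros [_ Hb]. exists 1%nat. split; [lia|]. simpl. unfold ball in Hb. unfold U in Hb. simpl in Hb. rewrite H0 in *. exact Hb.
  - intros [_ [Hh|Hb]].
    + destruct (IH Hh) as [k [Hk Hd]]. exists k. split; [lia|exact Hd].
    + exists (S (S m')). split; [lia|]. exact Hb.
Qed.

Theorem lemma4p4 (lam theta : R) (P : pt -> Prop) (V : nat -> pt) :
  0 < lam -> 0 < theta < PI / 2 ->
  locally_finite P -> P origin ->
  V 0%nat = origin ->
  (forall i : nat, nav_step theta P (V i) (V (S i))) ->
  forall (n : nat) (w : pt),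
    ~ (cone (PI / 2 - theta) (V n) w /\ H theta V n w).
Proof.
  intros Hl Ht Hf HP H0 Hnav n w [Hc Hh].
  destruct (H_ball theta V n w H0 Hh) as [k [Hk Hd]].
  assert (reach : forall j m, cone theta (V j) (V (j + S m)%nat)).
  { intros j m; induction m as [|m IH].
    - replace (j + 1)%nat with (S j) by lia. apply (Hnav j).
    - apply cone_trans with (V (j + S m)%nat); auto.
      replace (j + S (S m))%nat with (S (j + S m)) by lia. apply (Hnav _). }
  destruct k as [|k]; [lia|]. simpl in Hd.
  assert (HVn : cone theta (V k) (V n)).
  { replace n with (k + S (n - S k))%nat by lia. apply reach. }
  assert (HPn : P (V n)).
  { destruct n as [|n']; [lia|]. apply (Hnav n'). }
  destruct (Hnav k) as [_ [_ Hmin]].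
  pose proof (Hmin _ HPn HVn).
  assert (pdist (V n) (V k) <= pdist w (V k)).
  { unfold pdist. replace (psub w (V k)) with (padd (psub (V n) (V k)) (psub w (V n))).
    - apply dot_lemma with theta; auto.
      + now apply cone0_Cc.
      + apply cone0_Cc; [lra|exact Hc].
    - unfold padd, psub; simpl; f_equal; ring. }
  lra.
Qed.
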